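(* For every $\varepsilon\in(0,2)$ there exists $\varepsilon'\in(0,2)$ such that the following holds: if $f:[0,\infty)\to[0,\infty)$ is a monotone function belonging to the Gurov–Reshetnyak class $\mathcal{GR}_{\mathbb R_+}(\varepsilon)$, then its even extension $\tilde f:\mathbb R\to[0,\infty)$, $\tilde f(x)=f(|x|)$, belongs to $\mathcal{GR}_{\mathbb R}(\varepsilon')$.
   Context: Let $R$ be either $\mathbb R$ or $\mathbb R_+=[0,\infty)$. For a non-negative function $f$ that is locally summable on $R$ (i.e. summable on each bounded subinterval of $R$) and a bounded interval $I\subset R$, put $f_I=\frac1{|I|}\int_I f(x)\,dx$ and $\Omega(f;I)=\frac1{|I|}\int_I|f(x)-f_I|\,dx$, where $|I|$ is the length of $I$. For $\varepsilon\in(0,2]$, the Gurov–Reshetnyak class $\mathcal{GR}_R(\varepsilon)$ is the set of all non-negative locally summable functions $f$ on $R$ such that $\Omega(f;I)\le\varepsilon f_I$ for all bounded intervals $I\subset R$. *)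

(* Defs.v *)
From HB Require Import structures.
From mathcomp Require Import all_boot all_order all_algebra.
From mathcomp Require Import all_classical all_reals all_analysis.
Set Implicit Arguments. Unset Strict Implicit. Unset Printing Implicit Defensive.
Import Order.TTheory GRing.Theory Num.Theory.
Local Open Scope classical_set_scope.
Local Open Scope ring_scope.

Section GR.
Variable R : realType.
Local Notation mu := (@lebesgue_measure R).

Definition mean (f : R -> R) (a b : R) : R :=
  (b - a)^-1 * Rintegral mu `[a, b] f.

Definition Omega (f : R -> R) (a b : R) : R :=
  (b - a)^-1 * Rintegral mu `[a, b] (fun x => `|f x - mean f a b|).

Definition GR_R (eps : R) (f : R -> R) : Prop :=
  [/\ (forall x, 0 <= f x),
      (forall a b, a < b -> mu.-integrable `[a, b] (EFin \o f)) &
      (forall a b, a < b -> Omega f a b <= eps * mean f a b)].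

(* Gurov-Reshetnyak class on R_+ = [0, +oo): only values on [0,+oo) matter *)
Definition GR_Rplus (eps : R) (f : R -> R) : Prop :=
  [/\ (forall x, 0 <= x -> 0 <= f x),
      (forall a b, 0 <= a -> a < b -> mu.-integrable `[a, b] (EFin \o f)) &
      (forall a b, 0 <= a -> a < b -> Omega f a b <= eps * mean f a b)].

Definition monotone_Rplus (f : R -> R) : Prop :=
  (forall x y, 0 <= x -> x <= y -> f x <= f y) \/
  (forall x y, 0 <= x -> x <= y -> f y <= f x).

End GR.

(* Main.v *)
Require Import Defs.
From HB Require Import structures.
From mathcomp Require Import all_boot all_order all_algebra.
From mathcomp Require Import all_classical all_reals all_analysis.
From mathcomp Require Import measurable_realfun.
From mathcomp Require Import lra ring.
Import Order.TTheory GRing.Theory Num.Theory.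
Import numFieldNormedType.Exports.
Local Open Scope ring_scope.

Set Implicit Arguments. Unset Strict Implicit.
Section S.
Local Open Scope classical_set_scope.
Local Open Scope ring_scope.
Variable R : realType.
Local Notation mu := (@lebesgue_measure R).

Lemma preN_itv (a b : R) :
  (-%R : R -> measurableTypeR R) @^-1` `[a, b] = `[- b, - a]%classic.
Proof.
apply/seteqP; split => x /=; rewrite !in_itv /= => /andP[h1 h2];
  apply/andP; split; lra.
Qed.

Lemma reflect_int (h : R -> \bar R) (a b : R) :
  measurable_fun `[a, b]%classic h -> (forall x, a <= x <= b -> (0 <= h x)%E) ->
  (\int[mu]_(x in `[(- b)%R, (- a)%R]) h (- x)%R = \int[mu]_(x in `[a, b]) h x)%E.
Proof.
move=> mh h0.
have mN : measurable_fun [set: measurableTypeR R] (-%R : R -> measurableTypeR R).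
  exact: measurable_realfun.oppr_measurable.
rewrite -preN_itv.
rewrite -(ge0_integral_pushforward mN)//=; last first.
- by move=> x; rewrite inE /= in_itv /= => /h0.
apply: eq_measure_integral => //= A mA AS. by rewrite lebesgue_measureN.
Qed.

Lemma reflect_mfun (h : R -> \bar R) (a b : R) :
  measurable_fun `[a, b]%classic h -> measurable_fun `[- b, - a]%classic (h \o -%R).
Proof.
move=> mh; apply: (measurable_comp _ _ mh) => //.
- move=> _ [x /= + <-]; rewrite !in_itv /= => /andP[h1 h2]; apply/andP; split; lra.
Qed.

Lemma cst_int (a b k : R) : mu.-integrable `[a, b] (EFin \o cst k).
Proof.
apply: measurable_bounded_integrable => //.
- by rewrite /= lebesgue_measure_itv /=; case: ifP => _; rewrite ?ltry.
- exact: bounded_cst.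
Qed.

Lemma min_int (q : R -> R) (a b m : R) :
  mu.-integrable `[a, b] (EFin \o q) -> (forall x, a <= x <= b -> 0 <= q x) ->
  0 <= m -> mu.-integrable `[a, b] (EFin \o (fun x => Num.min (q x) m)).
Proof.
move=> iq q0 m0; apply: (le_integrable _ _ _ iq) => //.
- apply/measurable_EFinP; apply: measurable_minr => //.
  by move/measurable_int : (iq) => /measurable_EFinP.
- move=> x; rewrite /= in_itv /= => /q0 qx.
  rewrite lee_fin !ger0_norm //; last by rewrite le_min qx m0.
  by rewrite ge_min lexx.
Qed.

Lemma len_itv (a b : R) : a <= b -> fine (mu `[a, b]%classic) = b - a.
Proof.
move=> ab; rewrite lebesgue_measure_itv /= lte_fin.
case: ifP => [_|]; first by [].
move=> /negbT; rewrite -leNgt => ba.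
have -> : b = a by apply/eqP; rewrite eq_le ab ba.
by rewrite subrr.

Qed.

Lemma osc_id (q : R -> R) (a b : R) : a < b ->
  mu.-integrable `[a, b] (EFin \o q) -> (forall x, a <= x <= b -> 0 <= q x) ->
  Rintegral mu `[a, b] (fun x => `|q x - mean q a b|) =
  2 * Rintegral mu `[a, b] q - 2 * Rintegral mu `[a, b] (fun x => Num.min (q x) (mean q a b)).
Proof.
move=> ab iq q0.
set m := mean q a b.
have m0 : 0 <= m.
  rewrite /m /mean; apply: mulr_ge0; first by rewrite invr_ge0 subr_ge0 ltW.
  by apply: Rintegral_ge0 => x; rewrite /= in_itv /= => /q0.
have im := min_int iq q0 m0.
have ic := cst_int a b m.
have mL : m * (b - a) = Rintegral mu `[a, b] q.
  by rewrite /m /mean mulrC mulrA mulfV ?mul1r // subr_eq0 gt_eqF.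
clearbody m.
transitivity (Rintegral mu `[a, b] (fun x => (q x + m) - 2 * Num.min (q x) m)).
  apply: eq_Rintegral => x _.
  case: (leP (q x) m) => h.
  - rewrite ler0_norm ?subr_le0 //; lra.
  - rewrite gtr0_norm ?subr_gt0 //; lra.
have i1 : mu.-integrable `[a, b] (EFin \o (fun x => q x + m)).
  rewrite (_ : EFin \o _ = ((EFin \o q) \+ (EFin \o cst m))%E); last by apply/funext.
  exact: integrableD.
have i2 : mu.-integrable `[a, b] (EFin \o (fun x => 2 * Num.min (q x) m)).
  rewrite (_ : (EFin \o _) = (fun x => (2%:E * (EFin \o (fun x => Num.min (q x) m)) x)%E)); last by apply/funext => x.
  exact: integrableZl.
rewrite RintegralB //.
rewrite RintegralD // RintegralZl // Rintegral_cst // len_itv ?ltW //.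
rewrite -mL; lra.
Qed.

Lemma split_int (q : R -> R) (a c b : R) : a <= c -> c <= b ->
  mu.-integrable `[a, b] (EFin \o q) ->
  Rintegral mu `[a, b] q = Rintegral mu `[a, c] q + Rintegral mu `[c, b] q.
Proof.
move=> ac cb iq.
have := @Rintegral_itvB R q (BLeft a) (BRight b) c iq.
rewrite !bnd_simp => /(_ ac cb) h.
rewrite -[X in _ = _ + X](@Rintegral_itv_obnd_cbnd R c (BRight b)); last first.
  apply: integrableS iq => //; apply: subset_itvr; by rewrite bnd_simp.
rewrite -h; lra.
Qed.

Section G.
Variable f : R -> R.
Hypothesis f0 : forall x, 0 <= x -> 0 <= f x.
Hypothesis fint : forall a b, 0 <= a -> a < b -> mu.-integrable `[a, b] (EFin \o f).
Let G := fun x : R => f `|x|.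

Lemma G0 x : 0 <= G x.
Proof. by rewrite /G f0. Qed.

Lemma Geven x : G (- x) = G x.
Proof. by rewrite /G normrN. Qed.

Lemma fint' a b : 0 <= a -> mu.-integrable `[a, b] (EFin \o f).
Proof.
move=> a0; case: (leP b a) => ba.
- have ia : mu.-integrable `[a, a + 1] (EFin \o f) by apply: fint => //; lra.
  apply: (integrableS _ _ _ ia) => //.
  by move=> x /=; rewrite !in_itv /= => /andP[h1 h2]; apply/andP; split; lra.
- exact: fint.
Qed.

Lemma Gint_pos a b : 0 <= a -> mu.-integrable `[a, b] (EFin \o G).
Proof.
move=> a0; apply: (eq_integrable _ _ _ _ (fint' b a0)) => // x.
rewrite inE /= in_itv /= => /andP[h1 h2].
by rewrite /G /= ger0_norm //; lra.
Qed.

Lemma GmfunN (n : R) : 0 <= n -> measurable_fun `[- n, 0]%classic (EFin \o G).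
Proof.
move=> n0.
have := reflect_mfun (measurable_int _ (Gint_pos n (lexx 0))).
rewrite oppr0; apply: eq_measurable_fun => x _.
by rewrite /= Geven.
Qed.

Lemma itv_split (a c b : R) : a <= c -> c <= b ->
  `[a, b]%classic = `[a, c]%classic `|` `[c, b]%classic.
Proof.
move=> ac cb; apply/seteqP; split => x /=; rewrite !in_itv /=.
- move=> /andP[h1 h2]; case: (leP x c) => h.
  + by left; apply/andP; split.
  + by right; apply/andP; split => //; lra.
- by case => /andP[h1 h2]; apply/andP; split; lra.
Qed.

Lemma itv_split' (a c b : R) : a <= c -> c <= b ->
  `[a, b]%classic = `[a, c[%classic `|` `[c, b]%classic.
Proof.
move=> ac cb; apply/seteqP; split => x /=; rewrite !in_itv /=.
- move=> /andP[h1 h2]; case: (ltP x c) => h.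
  + by left; apply/andP; split.
  + by right; apply/andP; split => //; lra.
- by case => /andP[h1 h2]; apply/andP; split; lra.
Qed.

Lemma Gint_n (n : R) : 0 <= n -> mu.-integrable `[- n, n] (EFin \o G).
Proof.
move=> n0.
have mn : measurable_fun `[- n, n]%classic (EFin \o G).
  rewrite (@itv_split (- n) 0 n); [|lra|lra].
  apply/measurable_funU => //; split; first exact: GmfunN.
  exact: (measurable_int _ (Gint_pos n (lexx 0))).
apply/integrableP; split => //.
rewrite (@itv_split' (- n) 0 n); [|lra|lra].
rewrite ge0_integral_setU //; last 2 first.
- by rewrite -(@itv_split' (- n) 0 n); [apply: measurableT_comp|lra|lra].
- apply/disj_setPS => x [] /=; rewrite !in_itv /= => /andP[h1 h2] /andP[h3 h4]; lra.
apply: lte_add_pinfty; last first.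
  by case/integrableP : (Gint_pos n (lexx 0)).
have H := ge0_subset_integral mu (measurable_itv `[- n, 0[) (measurable_itv `[- n, 0]) (f := fun x => `|(EFin \o G) x|%E).
apply: le_lt_trans. apply: H.
  - by apply: measurableT_comp => //; exact: GmfunN.
  - by move=> x _; rewrite abse_ge0.
  - by move=> x /=; rewrite !in_itv /= => /andP[h1 h2]; apply/andP; split; lra.
have E := @reflect_int (fun x => `|(EFin \o G) x|%E) 0 n.
rewrite oppr0 in E.
rewrite (_ : (\int[mu]_(x in `[(- n)%R, 0%R]) `|(EFin \o G) x|)%E =
  (\int[mu]_(x in `[(- n)%R, 0%R]) `|(EFin \o G) (- x)%R|)%E); last first.
  by apply: eq_integral => x _; rewrite /= Geven.
rewrite E; last first.
- by move=> x _; rewrite abse_ge0.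
- by apply: measurableT_comp => //; exact: (measurable_int _ (Gint_pos n (lexx 0))).
by case/integrableP : (Gint_pos n (lexx 0)).
Qed.

Lemma Gint a b : mu.-integrable `[a, b] (EFin \o G).
Proof.
set n := `|a| + `|b|.
have n0 : 0 <= n by rewrite /n addr_ge0.
apply: (integrableS _ _ _ (Gint_n n0)) => //.
move=> x /=; rewrite !in_itv /= => /andP[h1 h2].
have ha : - a <= `|a| by rewrite -normrN ler_norm.
have hb : b <= `|b| by rewrite ler_norm.
have := normr_ge0 a; have := normr_ge0 b.
rewrite /n => *; apply/andP; split; lra.
Qed.

Lemma Rint_even (q : R -> R) (a b : R) : (forall x, q (- x) = q x) ->
  (forall x, 0 <= q x) -> measurable_fun `[a, b]%classic (EFin \o q) ->
  Rintegral mu `[- b, - a] q = Rintegral mu `[a, b] q.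
Proof.
move=> qe q0 mq; rewrite /Rintegral; congr fine.
rewrite -(@reflect_int (EFin \o q) a b) //; last by move=> x _; rewrite lee_fin.
by apply: eq_integral => x _; rewrite /= qe.
Qed.

Lemma mGab (a b : R) : measurable_fun `[a, b]%classic G.
Proof. by move/measurable_int : (Gint a b) => /measurable_EFinP. Qed.

Lemma mean_sym (a b : R) : mean G (- b) (- a) = mean G a b.
Proof.
rewrite /mean Rint_even //; first by rewrite opprK addrC.
- exact: Geven.
- exact: G0.
- by apply/measurable_EFinP; exact: mGab.
Qed.

Lemma Omega_sym (a b : R) : Omega G (- b) (- a) = Omega G a b.
Proof.
rewrite /Omega mean_sym Rint_even //; first by rewrite opprK addrC.
- by move=> x; rewrite Geven.
- apply/measurable_EFinP; apply: measurableT_comp => //.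
  apply: measurable_funB => //; exact: mGab.
Qed.

Lemma mean_ge0 (q : R -> R) (a b : R) : a < b -> (forall x, a <= x <= b -> 0 <= q x) ->
  0 <= mean q a b.
Proof.
move=> ab q0; rewrite /mean; apply: mulr_ge0; first by rewrite invr_ge0 subr_ge0 ltW.
by apply: Rintegral_ge0 => x; rewrite /= in_itv /= => /q0.
Qed.

Variable eps : R.
Hypothesis heps : 0 < eps < 2.
Hypothesis hosc : forall a b, 0 <= a -> a < b -> Omega f a b <= eps * mean f a b.
Let eps' := 3 / 2 + eps / 4.

Lemma case_pos (a b : R) : 0 <= a -> a < b -> Omega G a b <= eps' * mean G a b.
Proof.
move=> a0 ab.
have eqG : {in `[a, b]%classic, G =1 f}.
  by move=> x; rewrite inE /= in_itv /= => /andP[h1 h2]; rewrite /G ger0_norm //; lra.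
have mE : mean G a b = mean f a b by rewrite /mean; congr (_ * _); apply: eq_Rintegral.
have oE : Omega G a b = Omega f a b.
  rewrite /Omega mE; congr (_ * _); apply: eq_Rintegral => x xab.
  by rewrite eqG.
rewrite oE mE; apply: (le_trans (hosc a0 ab)).
apply: ler_wpM2r; first by apply: mean_ge0 => // x /andP[h1 h2]; apply: f0; lra.
case/andP: heps => h1 h2; rewrite /eps'; lra.
Qed.

Lemma inv_le (c X Y : R) : 0 < c -> c^-1 * X <= Y -> X <= c * Y.
Proof.
move=> c0 h; have := ler_wpM2l (ltW c0) h.
by rewrite mulrA mulfV ?gt_eqF // mul1r.
Qed.

Lemma le_inv (c X Y : R) : 0 < c -> X <= c * Y -> c^-1 * X <= Y.
Proof.
move=> c0 h; have ci : 0 < c^-1 by rewrite invr_gt0.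
have := ler_wpM2l (ltW ci) h.
by rewrite mulrA mulVf ?gt_eqF // mul1r.
Qed.

Lemma sub_itv (a b c d : R) : a <= c -> d <= b ->
  `[c, d]%classic `<=` `[a, b]%classic.
Proof.
by move=> ac db x /=; rewrite !in_itv /= => /andP[h1 h2]; apply/andP; split; lra.
Qed.

Lemma pw (fx mJ m : R) : 0 <= fx -> 0 <= mJ -> mJ <= 2 * m ->
  2^-1 * Num.min fx mJ <= Num.min fx m.
Proof.
move=> fx0 mJ0 hm.
have e1 : Num.min fx mJ <= fx by rewrite ge_min lexx.
have e2 : Num.min fx mJ <= mJ by rewrite ge_min lexx orbT.
have e3 : 0 <= Num.min fx mJ by rewrite le_min fx0 mJ0.
rewrite le_min; apply/andP; split; lra.
Qed.

Lemma hmJ_arith (a b m mJ S SJ SA : R) : a < 0 -> 0 < b -> - a <= b -> 0 <= m ->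
  m * (b - a) = S -> mJ * b = SJ -> S = SA + SJ -> 0 <= SA -> mJ <= 2 * m.
Proof.
move=> a0 b0 ab m0 mL mJb hS SA0.
have : (mJ - 2 * m) * b <= 0 by nra.
by rewrite pmulr_lle0 //; lra.
Qed.

Lemma final_arith (e b mJ S SJ SA MI MIb NJh NJ : R) :
  0 < e < 2 -> 0 < b ->
  2 * SJ - 2 * NJ <= b * (e * mJ) -> mJ * b = SJ ->
  MIb <= MI -> NJh <= MIb -> NJh = 2^-1 * NJ ->
  S = SA + SJ -> SA <= SJ -> 0 <= SA ->
  2 * S - 2 * MI <= (3 / 2 + e / 4) * S.
Proof.
move=> /andP[e1 e2] b0 hyp mJb M1 M2 M3 hS h1 h2.
have P : 0 <= (2 * SJ - S) * (2 - e) by apply: mulr_ge0; lra.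
nra.
Qed.

Lemma case_mid (a b : R) : a < 0 -> 0 < b -> - a <= b ->
  Omega G a b <= eps' * mean G a b.
Proof.
move=> a0 b0 ab'.
have ab : a < b by lra.
have a0' : a <= 0 by lra.
have b0' : 0 <= b by lra.
have ab'' : 0 <= - a by lra.
have iG := Gint a b.
have G0' : forall x, a <= x <= b -> 0 <= G x by move=> x _; exact: G0.
have f0' : forall x, 0 <= x <= b -> 0 <= f x by move=> x /andP[h _]; exact: f0.
have ifb := fint' b (lexx 0).
have hyp := hosc (lexx 0) b0.
rewrite /Omega (osc_id b0 ifb f0') in hyp.
have mJ0 : 0 <= mean f 0 b by apply: mean_ge0.
have mJb : mean f 0 b * b = Rintegral mu `[0, b] f.
  by rewrite /mean subr0 mulrC mulrA mulfV ?mul1r // gt_eqF.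
have imJ := min_int ifb f0' mJ0.
move: hyp mJ0 mJb imJ.
move EmJ : (mean f 0 b) => mJ.
move ENJ : (Rintegral mu `[0, b] (fun x => Num.min (f x) mJ)) => NJ hyp mJ0 mJb imJ.
rewrite /Omega (osc_id ab iG G0').
have m0 : 0 <= mean G a b by apply: mean_ge0.
have mL : mean G a b * (b - a) = Rintegral mu `[a, b] G.
  by rewrite /mean mulrC mulrA mulfV ?mul1r // subr_eq0 gt_eqF.
have imin := min_int iG G0' m0.
move: m0 mL imin.
move Em : (mean G a b) => m.
move EMI : (Rintegral mu `[a, b] (fun x => Num.min (G x) m)) => MI.
move ES : (Rintegral mu `[a, b] G) => S m0 mL imin.
have SJf : Rintegral mu `[0, b] G = Rintegral mu `[0, b] f.
  apply: eq_Rintegral => x; rewrite inE /= in_itv /= => /andP[h1 h2].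
  by rewrite /G ger0_norm.
have hS : S = Rintegral mu `[a, 0] G + Rintegral mu `[0, b] G.
  by rewrite -ES (@split_int G a 0 b).
have hSA : Rintegral mu `[a, 0] G = Rintegral mu `[0, - a] G.
  have := @Rint_even G a 0 Geven G0.
  rewrite oppr0 => -> //.
  by apply/measurable_EFinP; exact: mGab.
have hSA1 : Rintegral mu `[0, - a] G <= Rintegral mu `[0, b] G.
  rewrite (@split_int G 0 (- a) b ab'' ab' (Gint 0 b)) lerDl.
  by apply: Rintegral_ge0 => x _; exact: G0.
have SA0 : 0 <= Rintegral mu `[0, - a] G by apply: Rintegral_ge0 => x _; exact: G0.
have MI1 : Rintegral mu `[0, b] (fun x => Num.min (G x) m) <= MI.
  rewrite -EMI (@split_int _ a 0 b) // lerDr.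
  by apply: Rintegral_ge0 => x _; rewrite le_min G0 m0.
have imJ2 : mu.-integrable `[0, b] (EFin \o (fun x => 2^-1 * Num.min (f x) mJ)).
  rewrite (_ : (EFin \o _) = (fun x => ((2^-1)%:E * (EFin \o (fun x => Num.min (f x) mJ)) x)%E)); last by apply/funext => x.
  exact: integrableZl.
have imin0 : mu.-integrable `[0, b] (EFin \o (fun x => Num.min (G x) m)).
  by apply: (integrableS _ _ _ imin) => //; apply: sub_itv.
rewrite SJf in hS hSA1.
rewrite hSA in hS.
have hmJ : mJ <= 2 * m.
  exact: (hmJ_arith a0 b0 ab' m0 mL mJb hS SA0).
have MI2 : Rintegral mu `[0, b] (fun x => 2^-1 * Num.min (f x) mJ) <=
           Rintegral mu `[0, b] (fun x => Num.min (G x) m).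
  apply: le_Rintegral => // x; rewrite /= in_itv /= => /andP[h1 h2].
  have Gf : G x = f x by rewrite /G ger0_norm.
  rewrite Gf; apply: pw => //; exact: f0.
have MI3 : Rintegral mu `[0, b] (fun x => 2^-1 * Num.min (f x) mJ) = 2^-1 * NJ.
  by rewrite RintegralZl // ENJ.
rewrite subr0 in hyp.
have hyp' := inv_le b0 hyp.
apply: le_inv; first by rewrite subr_gt0.
have E : (b - a) * (eps' * m) = eps' * S by rewrite -mL; ring.
rewrite E /eps'.
exact: (final_arith heps b0 hyp' mJb MI1 MI2 MI3 hS hSA1 SA0).
Qed.
End G.
End S.
Unset Implicit Arguments. Set Strict Implicit.

Theorem lemma2p1 (R : realType) (eps : R) :
  0 < eps < 2 ->
  exists eps' : R, 0 < eps' < 2 /\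
    forall f : R -> R, monotone_Rplus f -> GR_Rplus eps f ->
      GR_R eps' (fun x => f `|x|).
Proof.
move=> heps; exists (3 / 2 + eps / 4); split.
  by case/andP: heps => h1 h2; apply/andP; split; lra.
move=> f _ [f0 fint hosc]; split.
- by move=> x; apply: f0.
- by move=> a b _; exact: (Gint fint).
move=> a b ab.
case: (leP 0 a) => a0; first exact: (case_pos f0 heps hosc a0 ab).
case: (leP b 0) => b0.
  rewrite -(Omega_sym f0 fint) -(mean_sym f0 fint).
  apply: (case_pos f0 heps hosc); lra.
case: (leP (- a) b) => h.
  by apply: (case_mid f0 fint heps hosc) => //; lra.
rewrite -(Omega_sym f0 fint) -(mean_sym f0 fint).
apply: (case_mid f0 fint heps hosc); lra.
Qed.
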